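(* Every closed convex subset of $\mathbb{R}^2$ is drawable.
   Context: For $A\subseteq\mathbb{R}^2$ let $N(A)=\{x\in\mathbb{R}^2: |x-a|<1 \text{ for some } a\in A\}$. Let $\mathcal{D}_1=\{N(A_1): A_1\subseteq\mathbb{R}^2\}$ and for $n\ge 2$ let $\mathcal{D}_n=\{D\cup N(A_n): D\in\mathcal{D}_{n-1}, A_n\subseteq\mathbb{R}^2\}$ if $n$ is odd and $\mathcal{D}_n=\{D\setminus N(A_n): D\in\mathcal{D}_{n-1}, A_n\subseteq\mathbb{R}^2\}$ if $n$ is even. A set is drawable if it lies in $\mathcal{D}=\bigcup_{n\ge1}\mathcal{D}_n$. *)

(* Defs.v *)
From Stdlib Require Import Reals Lra.
Open Scope R_scope.

Definition pt := (R * R)%type.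

Definition dist2 (x a : pt) : R :=
  sqrt ((fst x - fst a) ^ 2 + (snd x - snd a) ^ 2).

Definition N (A : pt -> Prop) : pt -> Prop :=
  fun x => exists a, A a /\ dist2 x a < 1.

(* Dn n S : S belongs to the family D_n (sets are predicates, compared
   extensionally). D_1 = {N(A_1)}; for n >= 2, D_n = {D ∪ N(A_n)} if n odd,
   {D \ N(A_n)} if n even, with D in D_{n-1}. *)
Fixpoint Dn (n : nat) (X : pt -> Prop) : Prop :=
  match n with
  | O => False
  | Datatypes.S m =>
    match m with
    | O => exists A : pt -> Prop, forall x, X x <-> N A x
    | _ => exists (D : pt -> Prop) (A : pt -> Prop),
             Dn m D /\
             (forall x, X x <->
                (if Nat.even n then D x /\ ~ N A x else D x \/ N A x))
    end
  end.

Definition drawable (S : pt -> Prop) : Prop := exists n, (1 <= n)%nat /\ Dn n S.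

Definition convex (C : pt -> Prop) : Prop :=
  forall x y t, C x -> C y -> 0 <= t <= 1 ->
    C ((1 - t) * fst x + t * fst y, (1 - t) * snd x + t * snd y).

Definition closed2 (C : pt -> Prop) : Prop :=
  forall x, ~ C x -> exists e, 0 < e /\ forall y, dist2 x y < e -> ~ C y.

(* Main.v *)
Require Import Defs.
From Stdlib Require Import Reals Lra Psatz Lia Classical.
Open Scope R_scope.
Lemma key_ineq (W P s mu eps : R): 0 <= W -> 0 < s -> s < 1 -> mu * s = 1 + s/2 -> 0 < eps ->
  3*eps <= s^4 ->
  (forall t, 0 <= t <= 1 -> 2*t*P <= eps + t^2 * W) -> 0 <= W - 2*mu*P + s.
Proof.
  intros HW Hs Hs1 Hmu He He4 Ht.
  assert (Hmu0 : 0 < mu) by nra.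
  destruct (Rle_lt_dec P 0) as [HP|HP]; [nra|].
  destruct (Rlt_le_dec W P) as [HWP|HWP].
  - specialize (Ht 1 ltac:(lra)).
    assert (P < eps) by nra.
    assert (s^4 <= s^2).
    { assert (0 < s*s) by nra. assert (s*s < 1) by nra.
      replace (s^4) with ((s*s)*(s*s)) by ring. replace (s^2) with ((s*s)*1) by ring.
      apply Rmult_le_compat_l; lra. }
    assert (2 * (mu*s) * eps <= s*s) by nra.
    assert (2 * mu * eps <= s).
    { apply (Rmult_le_reg_r s); [lra|]. nra. }
    nra.
  - assert (HW0 : 0 < W) by lra.
    specialize (Ht (P/W)).
    assert (H1 : 0 <= P/W <= 1).
    { split. apply Rlt_le, Rdiv_lt_0_compat; lra.
      apply (Rmult_le_reg_r W); [lra|]. field_simplify; lra. }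
    specialize (Ht H1).
    assert (HPP : P*P <= eps * W).
    { replace (2 * (P / W) * P) with (2*(P*P)/W) in Ht by (field; lra).
      replace ((P / W) ^ 2 * W) with ((P*P)/W) in Ht by (field; lra).
      apply (Rmult_le_compat_r W) in Ht; [|lra].
      replace (2 * (P * P) / W * W) with (2*(P*P)) in Ht by (field; lra).
      replace ((eps + P * P / W) * W) with (eps*W + P*P) in Ht by (field; lra).
      lra. }
    assert (s^4 <= s^3).
    { assert (0 < s*s*s) by (apply Rmult_lt_0_compat; nra).
      replace (s^4) with ((s*s*s)*s) by ring. replace (s^3) with ((s*s*s)*1) by ring.
      apply Rmult_le_compat_l; lra. }
    assert ((mu*s)^2 * eps <= s^3).
    { rewrite Hmu. assert ((1+s/2)^2 <= 3) by nra.
      assert ((1+s/2)^2 * eps <= 3*eps) by (apply Rmult_le_compat_r; lra). lra. }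
    assert (Hm2 : mu*mu*eps <= s).
    { apply (Rmult_le_reg_r (s*s)); [nra|].
      replace (mu*mu*eps*(s*s)) with ((mu*s)^2*eps) by ring.
      replace (s*(s*s)) with (s^3) by ring. lra. }
    assert (mu*mu*(P*P) <= s*W).
    { assert (mu*mu*(P*P) <= mu*mu*(eps*W)) by (apply Rmult_le_compat_l; nra).
      assert (mu*mu*eps*W <= s*W) by (apply Rmult_le_compat_r; lra). nra. }
    assert ((W+s)*(W+s) >= 4*(mu*P)*(mu*P)).
    { assert (0 <= (W-s)*(W-s)) by apply Rle_0_sqr. nra. }
    assert (0 < mu*P) by nra.
    destruct (Rle_lt_dec (2*mu*P) (W+s)) as [Hok|Hbad]; [lra|].
    assert ((W+s)*(W+s) < (2*mu*P)*(2*mu*P)).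
    { apply Rmult_le_0_lt_compat; lra. }
    lra.
Qed.

Definition q (x c : pt) : R := (fst x - fst c) ^ 2 + (snd x - snd c) ^ 2.

Lemma q_ge0 x c : 0 <= q x c.
Proof. unfold q. apply Rplus_le_le_0_compat; apply pow2_ge_0. Qed.

Lemma inf_exists (C : pt -> Prop) (x c1 : pt) (e : R) :
  C c1 -> 0 < e -> (forall c, C c -> e <= q x c) ->
  exists m, e <= m /\ (forall c, C c -> m <= q x c) /\
    forall eps, 0 < eps -> exists c0, C c0 /\ q x c0 < m + eps.
Proof.
  intros Hc1 He Hlow.
  set (E := fun r => exists c, C c /\ r = - q x c).
  assert (Hb : bound E).
  { exists 0. intros r [c [Hc ->]]. pose proof (q_ge0 x c). lra. }
  assert (Hne : exists r, E r) by (exists (- q x c1); exists c1; split; auto).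
  destruct (completeness E Hb Hne) as [l [Hub Hlub]].
  exists (-l). split; [|split].
  - assert (l <= -e); [|lra]. apply Hlub. intros r [c [Hc ->]].
    specialize (Hlow c Hc). lra.
  - intros c Hc. assert (- q x c <= l) by (apply Hub; exists c; auto). lra.
  - intros eps Heps.
    destruct (classic (exists c0, C c0 /\ q x c0 < -l + eps)) as [H|H]; [exact H|].
    exfalso.
    assert (l <= l - eps); [|lra].
    apply Hlub. intros r [c [Hc ->]].
    destruct (Rlt_le_dec (q x c) (-l+eps)) as [Hlt|Hle].
    + exfalso; apply H; exists c; auto.
    + lra.
Qed.

Lemma sqrt_lt1 y : y < 1 -> sqrt y < 1.
Proof.
  intro H. destruct (Rle_lt_dec y 0) as [H0|H0].
  - rewrite (sqrt_neg_0 y H0). lra.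
  - rewrite <- sqrt_1. apply sqrt_lt_1; lra.
Qed.

Lemma sqrt_ge1 y : 1 <= y -> 1 <= sqrt y.
Proof. intro H. rewrite <- sqrt_1. apply sqrt_le_1_alt; lra. Qed.

Lemma sep (C : pt -> Prop) : closed2 C -> convex C -> forall x c1, ~ C x -> C c1 -> dist2 x c1 < 1 ->
  exists a, (forall c, C c -> 1 <= dist2 c a) /\ dist2 x a < 1.
Proof.
  intros Hcl Hcv x c1 Hx Hc1 Hd1.
  destruct (Hcl x Hx) as [e [He Hball]].
  assert (Hlow : forall c, C c -> e*e <= q x c).
  { intros c Hc. destruct (Rle_lt_dec (e*e) (q x c)) as [h|h]; [exact h|].
    exfalso. apply (Hball c); [|exact Hc].
    unfold dist2. fold (q x c). rewrite <- (sqrt_square e) by lra.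
    apply sqrt_lt_1; [apply q_ge0|nra|exact h]. }
  assert (Hq1 : q x c1 < 1).
  { destruct (Rlt_le_dec (q x c1) 1) as [h|h]; [exact h|].
    exfalso. apply sqrt_ge1 in h. unfold dist2 in Hd1. fold (q x c1) in Hd1. lra. }
  destruct (inf_exists C x c1 (e*e) Hc1 ltac:(nra) Hlow) as [m [Hem [Hm Happ]]].
  assert (Hm1 : m < 1) by (specialize (Hm c1 Hc1); lra).
  assert (Hm0 : 0 < m) by nra.
  set (eps := Rmin (m*m/3) (1-m)).
  assert (Heps0 : 0 < eps) by (unfold eps; apply Rmin_pos; nra).
  assert (Heps1 : eps <= m*m/3) by apply Rmin_l.
  assert (Heps2 : eps <= 1-m) by apply Rmin_r.
  destruct (Happ eps Heps0) as [c0 [Hc0 HD]].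
  set (D := q x c0) in *.
  assert (HDm : m <= D) by (apply Hm; exact Hc0).
  assert (HD1 : D < 1) by lra.
  set (s := sqrt D).
  assert (Hs0 : 0 < s) by (apply sqrt_lt_R0; lra).
  assert (Hss : s*s = D) by (apply sqrt_sqrt; lra).
  assert (Hs1 : s < 1) by nra.
  set (mu := (1 + s/2)/s).
  assert (Hmu : mu * s = 1 + s/2) by (unfold mu; field; lra).
  set (vx := fst x - fst c0). set (vy := snd x - snd c0).
  assert (HDv : D = vx^2 + vy^2) by reflexivity.
  exists (fst c0 + mu*vx, snd c0 + mu*vy). split.
  - intros c Hc.
    set (wx := fst c - fst c0). set (wy := snd c - snd c0).
    pose proof (key_ineq (wx^2+wy^2) (wx*vx+wy*vy) s mu eps ltac:(nra) Hs0 Hs1 Hmu Heps0) as K.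
    assert (H4 : 3*eps <= s^4).
    { replace (s^4) with (D*D) by (rewrite <- Hss; ring). nra. }
    specialize (K H4).
    assert (Kt : forall t, 0 <= t <= 1 -> 2*t*(wx*vx+wy*vy) <= eps + t^2*(wx^2+wy^2)).
    { intros t Ht. pose proof (Hcv c0 c t Hc0 Hc Ht) as Hp.
      apply Hm in Hp. unfold q in Hp. simpl in Hp.
      assert (Heq : (fst x - ((1 - t) * fst c0 + t * fst c)) ^ 2 +
                    (snd x - ((1 - t) * snd c0 + t * snd c)) ^ 2
                    = D - 2*t*(wx*vx+wy*vy) + t^2*(wx^2+wy^2)).
      { rewrite HDv. unfold wx, wy, vx, vy. ring. }
      lra. }
    specialize (K Kt).
    apply sqrt_ge1.
    assert (Hmu2 : mu*mu*D = (1+s/2)^2) by (rewrite <- Hss, <- Hmu; ring).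
    assert (Heq : (fst c - fst (fst c0 + mu * vx, snd c0 + mu * vy)) ^ 2 +
                  (snd c - snd (fst c0 + mu * vx, snd c0 + mu * vy)) ^ 2
                  = (wx^2+wy^2) - 2*mu*(wx*vx+wy*vy) + mu*mu*D).
    { rewrite HDv. simpl. unfold wx, wy. ring. }
    rewrite Heq, Hmu2. nra.
  - unfold dist2. apply sqrt_lt1.
    assert (Heq : (fst x - fst (fst c0 + mu * vx, snd c0 + mu * vy)) ^ 2 + (snd x - snd (fst c0 + mu * vx, snd c0 + mu * vy)) ^ 2
                  = (mu*s - s)^2).
    { replace ((mu*s - s)^2) with ((mu-1)^2*(s*s)) by ring. rewrite Hss, HDv.
      simpl. unfold vx, vy. ring. }
    rewrite Heq, Hmu. nra.
Qed.

Theorem theorem2p1 : forall C : pt -> Prop, closed2 C -> convex C -> drawable C.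
Proof.
  intros C Hcl Hcv.
  exists 2%nat. split; [lia|].
  simpl.
  exists (Defs.N C), (fun a => forall c, C c -> 1 <= dist2 c a).
  split.
  - exists C. intro x. tauto.
  - intro x. split.
    + intro Hx. split.
      * exists x. split; [exact Hx|]. unfold dist2.
        replace ((fst x - fst x) ^ 2 + (snd x - snd x) ^ 2) with 0 by ring.
        rewrite sqrt_0. lra.
      * intros [a [Ha Hxa]]. specialize (Ha x Hx). lra.
    + intros [[c1 [Hc1 Hd]] Hn].
      destruct (classic (C x)) as [h|h]; [exact h|].
      exfalso. apply Hn.
      destruct (sep C Hcl Hcv x c1 h Hc1 Hd) as [a [Ha Hxa]].
      exists a. auto.
Qed.
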